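(* Let $A=[a_1,\ldots,a_n]$ and $B=[b_1,\ldots,b_n]$ be matrices in $\mathbb{R}^{m,n}$ whose columns have Euclidean norm $1$, and suppose $\mathcal{M}_D(A,B)\ne 1$. Then \[ \mathcal{M}(A+B)\le\frac{\mathcal{M}(A)+2\mathcal{M}_{OD}(A,B)+\mathcal{M}(B)}{2\bigl(1-\mathcal{M}_D(A,B)\bigr)}. \]
   Context: For $C=[c_1,\ldots,c_n]$ with columns of norm $1$, the mutual incoherence is $\mathcal{M}(C)=\max_{i\ne j}|\langle c_i,c_j\rangle|$. For $A+B$, whose columns $a_i+b_i$ are nonzero but not necessarily normalized, $\mathcal{M}(A+B)$ means the mutual incoherence of the column-normalized matrix, i.e. $\max_{i\ne j}\frac{|\langle a_i+b_i,a_j+b_j\rangle|}{\|a_i+b_i\|_2\|a_j+b_j\|_2}$. The off-diagonal mutual incoherence is $\mathcal{M}_{OD}(A,B)=\max_{i\ne j}|\langle a_i,b_j\rangle|$ and the diagonal mutual incoherence is $\mathcal{M}_D(A,B)=\max_i|\langle a_i,b_i\rangle|$. *)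

(* Defs.v *)
From mathcomp Require Import all_boot all_order all_algebra.
Set Implicit Arguments. Unset Strict Implicit. Unset Printing Implicit Defensive.
Import Order.TTheory GRing.Theory Num.Theory.
Local Open Scope ring_scope.

Definition colip (R : rcfType) (m n : nat) (A B : 'M[R]_(m, n)) (i j : 'I_n) : R :=
  \sum_(k < m) A k i * B k j.

Definition colnorm (R : rcfType) (m n : nat) (A : 'M[R]_(m, n)) (i : 'I_n) : R :=
  Num.sqrt (colip A A i i).

(* mutual incoherence of the column-normalized matrix:
   max_{i<>j} |<c_i,c_j>| / (||c_i|| ||c_j||)  (0 if n <= 1).
   For matrices with unit-norm columns this is max_{i<>j} |<c_i,c_j>|. *)
Definition mutual_incoherence (R : rcfType) (m n : nat) (C : 'M[R]_(m, n)) : R :=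
  \big[Num.max/0]_(ij : 'I_n * 'I_n | ij.1 != ij.2)
     (`|colip C C ij.1 ij.2| / (colnorm C ij.1 * colnorm C ij.2)).

Definition mutual_incoherence_OD (R : rcfType) (m n : nat) (A B : 'M[R]_(m, n)) : R :=
  \big[Num.max/0]_(ij : 'I_n * 'I_n | ij.1 != ij.2) `|colip A B ij.1 ij.2|.

Definition mutual_incoherence_D (R : rcfType) (m n : nat) (A B : 'M[R]_(m, n)) : R :=
  \big[Num.max/0]_(i : 'I_n) `|colip A B i i|.

(* Main.v *)
Require Import Defs.
From mathcomp Require Import all_boot all_order all_algebra.
From mathcomp Require Import lra.
Import Order.TTheory GRing.Theory Num.Theory.
Local Open Scope ring_scope.

Set Implicit Arguments.
Section H.
Context {R : rcfType} {m n : nat}.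
Implicit Types (A B : 'M[R]_(m, n)).

Lemma colipDl A B C i j : colip (A + B) C i j = colip A C i j + colip B C i j.
Proof. by rewrite /colip -big_split /=; apply: eq_bigr => k _; rewrite !mxE mulrDl. Qed.
Lemma colipDr A B C i j : colip C (A + B) i j = colip C A i j + colip C B i j.
Proof. by rewrite /colip -big_split /=; apply: eq_bigr => k _; rewrite !mxE mulrDr. Qed.
Lemma colipNl A C i j : colip (- A) C i j = - colip A C i j.
Proof. by rewrite /colip -sumrN; apply: eq_bigr => k _; rewrite !mxE mulNr. Qed.
Lemma colipNr A C i j : colip C (- A) i j = - colip C A i j.
Proof. by rewrite /colip -sumrN; apply: eq_bigr => k _; rewrite !mxE mulrN. Qed.
Lemma colipC A B i j : colip A B i j = colip B A j i.
Proof. by rewrite /colip; apply: eq_bigr => k _; rewrite mulrC. Qed.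
Lemma colip_ge0 A i : 0 <= colip A A i i.
Proof. by rewrite /colip sumr_ge0 // => k _; rewrite -expr2 sqr_ge0. Qed.
Lemma colip1 A i : colnorm A i = 1 -> colip A A i i = 1.
Proof.
move=> h; rewrite -[colip _ _ _ _]sqr_sqrtr ?colip_ge0 //.
by rewrite -/(colnorm A i) h expr1n.
Qed.
End H.

Theorem theorem4p4 (R : rcfType) (m n : nat) (A B : 'M[R]_(m, n)) :
  (forall i : 'I_n, colnorm A i = 1) ->
  (forall i : 'I_n, colnorm B i = 1) ->
  mutual_incoherence_D A B != 1 ->
  mutual_incoherence (A + B) <=
    (mutual_incoherence A + 2 * mutual_incoherence_OD A B + mutual_incoherence B)
    / (2 * (1 - mutual_incoherence_D A B)).
Proof.
move=> hA hB hD.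
set MD := mutual_incoherence_D A B.
set MA := mutual_incoherence A.
set MB := mutual_incoherence B.
set MO := mutual_incoherence_OD A B.
have cabs i : `|colip A B i i| <= 1.
  have h1 := colip_ge0 (A + B) i.
  have h2 := colip_ge0 (A - B) i.
  rewrite !colipDl !colipDr !colipNl !colipNr (colipC B A) !colip1 // in h1 h2.
  rewrite ler_norml; apply/andP; split; lra.
have MDle i : `|colip A B i i| <= MD.
  by rewrite /MD /mutual_incoherence_D; apply: (le_bigmax _ (fun i => `|colip A B i i|) i).
have MD0 : 0 <= MD by rewrite /MD /mutual_incoherence_D; elim/big_ind: _ => // x y hx hy; rewrite le_max hx.
have MD1 : MD < 1.
  rewrite lt_neqAle hD /=.
  rewrite /MD /mutual_incoherence_D; elim/big_ind: _ => //.
  by move=> x y hx hy; rewrite ge_max hx hy.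
set d := 1 - MD.
have d0 : 0 < d by rewrite /d subr_gt0.
have MA0 : 0 <= MA by rewrite /MA /mutual_incoherence; elim/big_ind: _ => //; last (by move=> x _; rewrite divr_ge0 // mulr_ge0 // sqrtr_ge0); by move=> x y hx hy; rewrite le_max hx.
have MB0 : 0 <= MB by rewrite /MB /mutual_incoherence; elim/big_ind: _ => //; last (by move=> x _; rewrite divr_ge0 // mulr_ge0 // sqrtr_ge0); by move=> x y hx hy; rewrite le_max hx.
have MO0 : 0 <= MO by rewrite /MO /mutual_incoherence_OD; elim/big_ind: _ => // x y hx hy; rewrite le_max hx.
set N := MA + 2 * MO + MB.
have N0 : 0 <= N by rewrite /N; lra.
have RHS0 : 0 <= N / (2 * d) by rewrite divr_ge0 // mulr_ge0 // ltW.
have nrm i : Num.sqrt (2 * d) <= colnorm (A + B) i.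
  rewrite /colnorm !colipDl !colipDr (colipC B A) !colip1 //.
  apply: ler_wsqrtr.
  have := MDle i; rewrite ler_norml => /andP[h1 h2]; rewrite /d; lra.
have MAle i j : i != j -> `|colip A A i j| <= MA.
  move=> hij; rewrite /MA /mutual_incoherence.
  have := le_bigmax_cond 0 (P := fun ij : 'I_n * 'I_n => ij.1 != ij.2)
    (fun ij : 'I_n * 'I_n => `|colip A A ij.1 ij.2| / (colnorm A ij.1 * colnorm A ij.2)) (j := (i, j)) hij.
  by rewrite /= !hA mulr1 divr1.
have MBle i j : i != j -> `|colip B B i j| <= MB.
  move=> hij; rewrite /MB /mutual_incoherence.
  have := le_bigmax_cond 0 (P := fun ij : 'I_n * 'I_n => ij.1 != ij.2)
    (fun ij : 'I_n * 'I_n => `|colip B B ij.1 ij.2| / (colnorm B ij.1 * colnorm B ij.2)) (j := (i, j)) hij.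
  by rewrite /= !hB mulr1 divr1.
have MOle i j : i != j -> `|colip A B i j| <= MO.
  move=> hij; rewrite /MO /mutual_incoherence_OD.
  exact: (le_bigmax_cond 0 (P := fun ij : 'I_n * 'I_n => ij.1 != ij.2)
    (fun ij : 'I_n * 'I_n => `|colip A B ij.1 ij.2|) (j := (i, j)) hij).
rewrite /mutual_incoherence; elim/big_ind: _ => // [x y hx hy|[i j] /= hij].
  by rewrite ge_max hx hy.
have hnum : `|colip (A + B) (A + B) i j| <= N.
  rewrite !colipDl !colipDr (colipC B A).
  have h1 := MAle i j hij; have h2 := MBle i j hij.
  have h3 := MOle i j hij; have h4 : `|colip A B j i| <= MO by apply: MOle; rewrite eq_sym.
  have := ler_normD (colip A A i j + colip A B i j) (colip A B j i + colip B B i j).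
  have := ler_normD (colip A A i j) (colip A B i j).
  have := ler_normD (colip A B j i) (colip B B i j).
  rewrite /N; lra.
have hden : 2 * d <= colnorm (A + B) i * colnorm (A + B) j.
  have e : 2 * d = Num.sqrt (2 * d) * Num.sqrt (2 * d).
    by rewrite -expr2 sqr_sqrtr // mulr_ge0 // ltW.
  by rewrite e; apply: ler_pM => //; apply: sqrtr_ge0.
have P0 : 0 < colnorm (A + B) i * colnorm (A + B) j.
  by apply: lt_le_trans hden; rewrite mulr_gt0.
rewrite ler_pdivrMr //.
apply: le_trans hnum _.
apply: le_trans (ler_wpM2l RHS0 hden).
by rewrite mulfVK // gt_eqF // mulr_gt0.
Qed.
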